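(* Let $n\ge2$. The limit set $\Lambda\subset\mathrm{Iso}_2(\mathbb R^{2n},\omega_h)$ associated to $\mathrm{SU}(n-1,1)\subset\mathrm{Sp}(\omega_h)$, namely the set of complex lines $L\subset\mathbb C^n$ with $h|_{L}\equiv0$, viewed as real $2$-planes in $\mathbb R^{2n}$ (a space homeomorphic to $S^{2n-3}$), is maximally antipodal in $\mathrm{Iso}_2(\mathbb R^{2n},\omega_h)$.
   Context: $h(u,v)=\overline u^TQv$ is the Hermitian form on $\mathbb C^n$ of signature $(n-1,1)$ with $Qe_1=e_n$, $Qe_n=e_1$, $Qe_k=e_k$ for $1<k<n$; $\mathrm{SU}(n-1,1)$ is the subgroup of $\mathrm{SL}(n,\mathbb C)$ preserving $h$. $\mathbb C^n$ is identified with $\mathbb R^{2n}$ via $(x_1+iy_1,\dots,x_n+iy_n)\mapsto(x_1,y_1,\dots,x_n,y_n)$, and $\omega_h=\mathrm{Im}\,h$ is a real symplectic form preserved by $\mathrm{SU}(n-1,1)$; $\mathrm{Sp}(\omega_h)$ is its symmetry group. $\mathrm{Iso}_2(\mathbb R^{2n},\omega_h)$ is the space of $\omega_h$-isotropic real $2$-planes; $V,W$ are antipodal iff $V\oplus W^{\perp_{\omega_h}}=\mathbb R^{2n}$. A subset is maximally antipodal if its distinct points are pairwise antipodal and every point of the ambient space is non-antipodal to at least one of its points. ($\Lambda$ is the flag limit set of the rank one subgroup $\mathrm{SU}(n-1,1)$ in $\mathrm{Iso}_2$, equal to the limit set of any uniform lattice of $\mathrm{SU}(n-1,1)$.) *)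

(* Defs.v *)
From HB Require Import structures.
From mathcomp Require Import all_boot all_order all_algebra.
From mathcomp Require Import reals.
From mathcomp.real_closed Require Import complex.

Set Implicit Arguments.
Unset Strict Implicit.
Unset Printing Implicit Defensive.

Import Order.TTheory GRing.Theory Num.Theory.
Local Open Scope ring_scope.

Section Defs.
Variables (R : realType) (n : nat).

(* The matrix Q : Q e_1 = e_n, Q e_n = e_1, Q e_k = e_k for 1 < k < n
   (0-based indices: 0 <-> n-1 swapped, others fixed). *)
Definition Qmx : 'M[R[i]]_n :=
  \matrix_(a, b) (if (val a == 0%N) || (val a == n.-1)
                  then (if (val a + val b == n.-1)%N then 1 else 0)
                  else (if a == b then 1 else 0)).

Definition hform (u v : 'rV[R[i]]_n) : R[i] :=
  (map_mx (@conjc R) u *m Qmx *m v^T) 0 0.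

(* Coordinates of R^{2n}: (x_1,y_1,...,x_n,y_n), i.e. real index k*2+j
   (0-based) is Re z_k if j = 0 and Im z_k if j = 1. *)
Lemma ridx_subproof (k : 'I_n) (j : 'I_2) : (k * 2 + j < n * 2)%N.
Proof.
case: k j => k hk [j hj] /=.
apply: (@leq_trans (k.+1 * 2)%N); last by rewrite leq_mul2r hk orbT.
by rewrite mulSn [(2 + _)%N]addnC ltn_add2l.
Qed.

Definition ridx (k : 'I_n) (j : 'I_2) : 'I_(n * 2) := Ordinal (ridx_subproof k j).

Definition cplx (x : 'rV[R]_(n * 2)) : 'rV[R[i]]_n :=
  \row_k (Complex (x 0 (ridx k 0)) (x 0 (ridx k 1))).

Definition omega_h (u v : 'rV[R]_(n * 2)) : R := complex.Im (hform (cplx u) (cplx v)).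

(* A real linear subspace of R^{2n} is represented by a matrix, via its
   row space; membership of x is (x <= V)%MS. *)
Definition isotropic (V : 'M[R]_(n * 2)) : Prop :=
  forall u v : 'rV[R]_(n * 2), (u <= V)%MS -> (v <= V)%MS -> omega_h u v = 0.

(* Iso_2(R^{2n}, omega_h): omega_h-isotropic real 2-planes.
   Two representatives V, W denote the same point iff (V == W)%MS. *)
Definition Iso2 (V : 'M[R]_(n * 2)) : Prop := \rank V = 2%N /\ isotropic V.

Definition in_perp (W : 'M[R]_(n * 2)) (u : 'rV[R]_(n * 2)) : Prop :=
  forall w : 'rV[R]_(n * 2), (w <= W)%MS -> omega_h w u = 0.

Definition antipodal (V W : 'M[R]_(n * 2)) : Prop :=
  (forall x : 'rV[R]_(n * 2), exists v w : 'rV[R]_(n * 2),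
      [/\ (v <= V)%MS, in_perp W w & x = v + w]) /\
  (forall v : 'rV[R]_(n * 2), (v <= V)%MS -> in_perp W v -> v = 0).

Definition maximally_antipodal (S : 'M[R]_(n * 2) -> Prop) : Prop :=
  [/\ (forall V, S V -> Iso2 V),
      (forall V W, S V -> S W -> ~~ (V == W)%MS -> antipodal V W) &
      (forall W, Iso2 W -> exists2 V, S V & ~ antipodal W V)].

Definition Lambda (V : 'M[R]_(n * 2)) : Prop :=
  exists z : 'rV[R[i]]_n,
    [/\ z != 0,
        (forall c c' : R[i], hform (c *: z) (c' *: z) = 0) &
        (forall x : 'rV[R]_(n * 2), (x <= V)%MS <-> exists c : R[i], cplx x = c *: z)].

End Defs.

(* Main.v *)
Require Import Defs.
From HB Require Import structures.
From mathcomp Require Import all_boot all_order all_algebra.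
From mathcomp Require Import reals.
From mathcomp.real_closed Require Import complex.
From mathcomp Require Import ring lra zify.
Set Implicit Arguments. Unset Strict Implicit. Unset Printing Implicit Defensive.
Import Order.TTheory GRing.Theory Num.Theory.
Local Open Scope ring_scope.
Local Open Scope complex_scope.

Module H1.
Section Cplx.
Variable R : realType.
Local Notation C := R[i].
Local Notation cj := (@conjc R).
Local Notation Re := (@complex.Re R).
Local Notation Im := (@complex.Im R).

Lemma cjK (x : C) : cj (cj x) = x. Proof. exact: conjcK. Qed.
Lemma cjD (x y : C) : cj (x + y) = cj x + cj y. Proof. exact: rmorphD. Qed.
Lemma cjM (x y : C) : cj (x * y) = cj x * cj y. Proof. exact: rmorphM. Qed.
Lemma cjN (x : C) : cj (- x) = - cj x. Proof. exact: rmorphN. Qed.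
Lemma cjB (x y : C) : cj (x - y) = cj x - cj y. Proof. exact: rmorphB. Qed.
Lemma cj0 : cj 0 = 0. Proof. exact: rmorph0. Qed.
Lemma cjR (r : R) : cj r%:C = r%:C. Proof. exact: conjc_real. Qed.

Lemma ReD (x y : C) : Re (x + y) = Re x + Re y. Proof. by case: x; case: y. Qed.
Lemma ImD (x y : C) : Im (x + y) = Im x + Im y. Proof. by case: x; case: y. Qed.
Lemma ReM (x y : C) : Re (x * y) = Re x * Re y - Im x * Im y. Proof. by case: x; case: y. Qed.
Lemma ImM (x y : C) : Im (x * y) = Re x * Im y + Im x * Re y.
Proof. by case: x => a b; case: y => c d /=; ring. Qed.
Lemma ReR (r : R) : Re r%:C = r. Proof. by []. Qed.
Lemma ImR (r : R) : Im r%:C = 0. Proof. by []. Qed.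
Lemma Recj (x : C) : Re (cj x) = Re x. Proof. by case: x. Qed.
Lemma Imcj (x : C) : Im (cj x) = - Im x. Proof. by case: x. Qed.
Lemma ReN (x : C) : Re (- x) = - Re x. Proof. by case: x. Qed.
Lemma ImN (x : C) : Im (- x) = - Im x. Proof. by case: x. Qed.
Lemma Re0 : Re 0 = 0. Proof. by []. Qed.
Lemma Im0 : Im 0 = 0. Proof. by []. Qed.
Lemma Rei : Re 'i%C = 0. Proof. by []. Qed.
Lemma Imi : Im 'i%C = 1. Proof. by []. Qed.

Lemma C_ext (x y : C) : Re x = Re y -> Im x = Im y -> x = y.
Proof. by case: x; case: y => /= ? ? ? ? -> ->. Qed.

Lemma realC (x : C) : Im x = 0 -> x = (Re x)%:C.
Proof. by move=> h; apply: C_ext. Qed.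

Lemma cjxx (x : C) : cj x * x = ((Re x)^+2 + (Im x)^+2)%:C.
Proof. apply: C_ext; rewrite ?ReM ?ImM ?Recj ?Imcj /=; ring. Qed.

Lemma Re_cjxx (x : C) : 0 <= Re (cj x * x).
Proof. rewrite cjxx ReR; apply: addr_ge0; exact: sqr_ge0. Qed.

Lemma Re_cjxx_eq0 (x : C) : Re (cj x * x) = 0 -> x = 0.
Proof.
rewrite cjxx ReR => h; have h1 : Re x = 0 by nra.
have h2 : Im x = 0 by nra. by apply: C_ext; rewrite ?h1 ?h2.
Qed.

Lemma ReSum I (r : seq I) (P : pred I) (F : I -> C) :
  Re (\sum_(i <- r | P i) F i) = \sum_(i <- r | P i) Re (F i).
Proof. by elim/big_rec2: _ => // i y1 y2 _ <-; rewrite ReD. Qed.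
Lemma ImSum I (r : seq I) (P : pred I) (F : I -> C) :
  Im (\sum_(i <- r | P i) F i) = \sum_(i <- r | P i) Im (F i).
Proof. by elim/big_rec2: _ => // i y1 y2 _ <-; rewrite ImD. Qed.
Lemma cjSum I (r : seq I) (P : pred I) (F : I -> C) :
  cj (\sum_(i <- r | P i) F i) = \sum_(i <- r | P i) cj (F i).
Proof. exact: rmorph_sum. Qed.

Lemma complexE' (x : C) : x = (Re x)%:C + (Im x)%:C * 'i%C.
Proof. by apply: C_ext; rewrite ?ReD ?ImD ?ReM ?ImM /=; ring. Qed.

End Cplx.

End H1.
Import H1.

Module H2.
Section H.
Variable R : realType.
Variable n' : nat.
Local Notation N := n'.+2.
Local Notation C := R[i].
Local Notation cj := (@conjc R).
Local Notation Re := (@complex.Re R).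
Local Notation Im := (@complex.Im R).
Local Notation h := (@hform R N).

Definition sig (a : 'I_N) : 'I_N :=
  if (val a == 0%N) || (val a == n'.+1) then rev_ord a else a.

Lemma QmxE (a j : 'I_N) : Qmx R N a j = (j == sig a)%:R.
Proof.
rewrite /Qmx /sig mxE /=. case: ifP => _; last by case: eqP => [->|/eqP h]; rewrite ?eqxx // eq_sym (negbTE h).
have -> : ((a + j)%N == n'.+1) = (j == rev_ord a); last by case: (j == rev_ord a).
have := ltn_ord a; have := ltn_ord j.
by move=> ha hj; apply/eqP/eqP => [e|e]; [apply: val_inj => /=|rewrite e /=]; lia.
Qed.

Lemma hformE (u v : 'rV[C]_N) : h u v = \sum_a cj (u 0 a) * v 0 (sig a).
Proof.
rewrite /hform mxE.
under eq_bigr => j _ do rewrite !mxE big_distrl /=.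
rewrite exchange_big /=; apply: eq_bigr => a _.
rewrite (bigD1 (sig a)) //= big1 ?addr0.
  by rewrite QmxE eqxx mulr1 mxE.
by move=> j /negbTE hj; rewrite QmxE hj mulr0 mul0r.
Qed.


Definition mid (k : 'I_N) : bool := (k != ord0) && (k != ord_max).

Lemma sig0 : sig ord0 = ord_max.
Proof. by apply: val_inj; rewrite /sig /= subn1. Qed.
Lemma sigmax : sig ord_max = ord0.
Proof. by apply: val_inj; rewrite /sig /= eqxx /= subnn. Qed.
Lemma sigmid k : mid k -> sig k = k.
Proof.
case/andP => h0 hm; rewrite /sig ifF //.
apply/negbTE; rewrite negb_or; apply/andP; split.
  by apply: contra h0 => /eqP e; apply/eqP/val_inj.
by apply: contra hm => /eqP e; apply/eqP/val_inj.
Qed.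

Lemma hsplit (u v : 'rV[C]_N) : h u v =
  cj (u 0 ord0) * v 0 ord_max + cj (u 0 ord_max) * v 0 ord0 +
  \sum_(k | mid k) cj (u 0 k) * v 0 k.
Proof.
rewrite hformE (bigD1 ord0) //= (bigD1 ord_max) //= sig0 sigmax addrA.
congr (_ + _); apply: eq_bigr => k hk; rewrite sigmid //.
Qed.

Lemma hDl (u u' v : 'rV[C]_N) : h (u + u') v = h u v + h u' v.
Proof. rewrite !hformE -big_split; apply: eq_bigr => a _; by rewrite !mxE cjD mulrDl. Qed.
Lemma hDr (u v v' : 'rV[C]_N) : h u (v + v') = h u v + h u v'.
Proof. rewrite !hformE -big_split; apply: eq_bigr => a _; by rewrite !mxE mulrDr. Qed.
Lemma hZl (c : C) (u v : 'rV[C]_N) : h (c *: u) v = cj c * h u v.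
Proof. rewrite !hformE big_distrr; apply: eq_bigr => a _; by rewrite !mxE cjM -mulrA. Qed.
Lemma hZr (c : C) (u v : 'rV[C]_N) : h u (c *: v) = c * h u v.
Proof. rewrite !hformE big_distrr; apply: eq_bigr => a _; by rewrite !mxE mulrCA. Qed.
Lemma hNl (u v : 'rV[C]_N) : h (- u) v = - h u v.
Proof. by rewrite -scaleN1r hZl rmorphN1 mulN1r. Qed.
Lemma hNr (u v : 'rV[C]_N) : h u (- v) = - h u v.
Proof. by rewrite -scaleN1r hZr mulN1r. Qed.
Lemma hBl (u u' v : 'rV[C]_N) : h (u - u') v = h u v - h u' v.
Proof. by rewrite hDl hNl. Qed.
Lemma hBr (u v v' : 'rV[C]_N) : h u (v - v') = h u v - h u v'.
Proof. by rewrite hDr hNr. Qed.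
Lemma hC (u v : 'rV[C]_N) : h v u = cj (h u v).
Proof.
rewrite !hsplit !cjD !cjM !cjK cjSum.
rewrite (eq_bigr (fun k => u 0 k * cj (v 0 k))); last first.
  by move=> k _; rewrite mulrC.
rewrite [in RHS](eq_bigr (fun k => u 0 k * cj (v 0 k))); last first.
  by move=> k _; rewrite cjM cjK mulrC.
by rewrite (addrC (cj (v 0 ord0) * _)) (mulrC (cj (v 0 ord0))) (mulrC (cj (v 0 ord_max))).
Qed.
Lemma h0l (v : 'rV[C]_N) : h 0 v = 0.
Proof. by rewrite -(scale0r (0 : 'rV[C]_N)) hZl rmorph0 mul0r. Qed.
Lemma h0r (v : 'rV[C]_N) : h v 0 = 0.
Proof. by rewrite -(scale0r (0 : 'rV[C]_N)) hZr mul0r. Qed.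

Lemma hxx_real (u : 'rV[C]_N) : h u u = (Re (h u u))%:C.
Proof.
apply: realC; have e := hC u u.
have : Im (h u u) = Im (cj (h u u)) by rewrite -e.
by rewrite Imcj => H; lra.
Qed.

Lemma idx_cases (k : 'I_N) : [\/ k = ord0, k = ord_max | mid k].
Proof.
rewrite /mid; case: eqP => [->|_]; first by constructor 1.
by case: eqP => [->|_]; [constructor 2|constructor 3].
Qed.

Lemma mid_val (k : 'I_N) : mid k -> (val k != 0%N) && (val k != n'.+1).
Proof.
case/andP => h0 hm; apply/andP; split.
  by apply: contra h0 => /eqP e; apply/eqP/val_inj.
by apply: contra hm => /eqP e; apply/eqP/val_inj.
Qed.

Lemma mid_none : n' = 0%N -> forall k, ~~ mid k.
Proof.
move=> e k; apply/negP => /mid_val /andP [/eqP h0 /eqP hm].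
have h0' : nat_of_ord k <> 0%N := h0; have hm' : nat_of_ord k <> n'.+1 := hm.
have := ltn_ord k; lia.
Qed.

Lemma Re_midsum_ge0 (u : 'rV[C]_N) : 0 <= Re (\sum_(k | mid k) cj (u 0 k) * u 0 k).
Proof. rewrite ReSum; apply: sumr_ge0 => k _; exact: Re_cjxx. Qed.

Lemma hpos (u : 'rV[C]_N) : u 0 ord_max = u 0 ord0 -> 0 <= Re (h u u).
Proof.
move=> e; rewrite hsplit e !ReD.
have := Re_cjxx (u 0 ord0); have := Re_midsum_ge0 u; lra.
Qed.

Lemma hpos_eq0 (u : 'rV[C]_N) : u 0 ord_max = u 0 ord0 -> Re (h u u) = 0 -> u = 0.
Proof.
move=> e; rewrite hsplit e !ReD => H.
have h1 := Re_cjxx (u 0 ord0); have h2 := Re_midsum_ge0 u.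
have a0 : u 0 ord0 = 0 by apply: Re_cjxx_eq0; lra.
have s0 : forall k, mid k -> u 0 k = 0.
  move=> k hk; apply: Re_cjxx_eq0; move: k hk.
  apply: psumr_eq0P => [k _|]; first exact: Re_cjxx.
  by rewrite -ReSum; lra.
apply/rowP => k; rewrite mxE; case: (idx_cases k) => [->|->|/s0 //]; by rewrite ?e.
Qed.

Lemma hneg2 (u : 'rV[C]_N) : n' = 0%N -> u 0 ord_max = - u 0 ord0 -> Re (h u u) <= 0.
Proof.
move=> en e; rewrite hsplit e big_pred0; last by move=> k; apply/negbTE/mid_none.
rewrite addr0 cjN mulNr mulrN !ReD ReN; have := Re_cjxx (u 0 ord0); lra.
Qed.

End H.

End H2.
Import H2.

Module H3.
Section R3.
Variable R : realType.
Variable n' : nat.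
Local Notation N := n'.+2.
Local Notation C := R[i].
Local Notation cj := (@conjc R).
Local Notation Re := (@complex.Re R).
Local Notation Im := (@complex.Im R).
Local Notation h := (@hform R N).
Local Notation cplx := (@cplx R N).

Definition idx (j : 'I_(N * 2)) : 'I_N := inord (j %/ 2).
Definition realify (y : 'rV[C]_N) : 'rV[R]_(N * 2) :=
  \row_j (if odd j then Im (y 0 (idx j)) else Re (y 0 (idx j))).

Lemma idx_val (j : 'I_(N * 2)) : nat_of_ord (idx j) = (j %/ 2)%N.
Proof. rewrite /idx inordK //; have := ltn_ord j; rewrite ltn_divLR //; lia. Qed.

Lemma idx_ridx (k : 'I_N) (e : 'I_2) : idx (ridx k e) = k.
Proof.
apply: ord_inj; rewrite idx_val /=; case: e => [[|[|e]] he] //=.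
  by rewrite addn0 mulnK.
by rewrite divnMDl // divn_small // addn0.
Qed.

Lemma odd_ridx (k : 'I_N) (e : 'I_2) : odd (ridx k e) = (val e == 1%N).
Proof. case: e => [[|[|e]] he] //=; rewrite ?addn0 ?oddD ?oddM //= ?andbF //. Qed.

Lemma ridx_idx0 (j : 'I_(N * 2)) : ~~ odd j -> ridx (idx j) 0 = j.
Proof.
move=> o; apply: ord_inj; rewrite /= idx_val addn0.
have e := divn_eq j 2; rewrite modn2 (negbTE o) in e; lia.
Qed.

Lemma ridx_idx1 (j : 'I_(N * 2)) : odd j -> ridx (idx j) 1 = j.
Proof.
move=> o; apply: ord_inj; rewrite /= idx_val.
have e := divn_eq j 2; rewrite modn2 o in e; lia.
Qed.

Lemma cplxE (x : 'rV[R]_(N * 2)) k : cplx x 0 k = Complex (x 0 (ridx k 0)) (x 0 (ridx k 1)).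
Proof. by rewrite mxE. Qed.

Lemma cplxK (y : 'rV[C]_N) : cplx (realify y) = y.
Proof.
apply/rowP => k; rewrite cplxE !mxE !odd_ridx !idx_ridx /=.
by case: (y 0 k).
Qed.

Lemma realifyK (x : 'rV[R]_(N * 2)) : realify (cplx x) = x.
Proof.
apply/rowP => j; rewrite !mxE /=; case: ifP => o /=.
  by rewrite ridx_idx1.
by rewrite ridx_idx0 // o.
Qed.

Lemma cplx_inj : injective cplx.
Proof. by move=> x y e; rewrite -(realifyK x) -(realifyK y) e. Qed.

Lemma cplxD (x y : 'rV[R]_(N * 2)) : cplx (x + y) = cplx x + cplx y.
Proof. by apply/rowP => k; rewrite !mxE; apply: C_ext; rewrite ?ReD ?ImD /= ?mxE. Qed.

Lemma cplxZ (r : R) (x : 'rV[R]_(N * 2)) : cplx (r *: x) = r%:C *: cplx x.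
Proof. apply/rowP => k; rewrite !mxE; apply: C_ext; rewrite ?ReM ?ImM /= ?mxE; ring. Qed.

Lemma cplx0 : cplx 0 = 0.
Proof. by rewrite -(scale0r (0 : 'rV[R]_(N * 2))) cplxZ scale0r. Qed.

Lemma cplxN (x : 'rV[R]_(N * 2)) : cplx (- x) = - cplx x.
Proof.
rewrite -scaleN1r cplxZ -scaleN1r; congr (_ *: _).
exact: rmorphN1.
Qed.

Lemma cplxB (x y : 'rV[R]_(N * 2)) : cplx (x - y) = cplx x - cplx y.
Proof. by rewrite cplxD cplxN. Qed.

Lemma realify0 : realify 0 = 0.
Proof. by apply: cplx_inj; rewrite cplxK cplx0. Qed.

Lemma cplx_eq0 (x : 'rV[R]_(N * 2)) : cplx x = 0 -> x = 0.
Proof. by rewrite -cplx0 => /cplx_inj. Qed.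

Lemma realify_lin (c : C) (y : 'rV[C]_N) :
  realify (c *: y) = Re c *: realify y + Im c *: realify ('i%C *: y).
Proof.
apply: cplx_inj; rewrite cplxD !cplxZ !cplxK scalerA -scalerDl.
by rewrite {1}(complexE' c).
Qed.

End R3.

End H3.
Import H3.

Module H4.
Section R4.
Variable R : realType.
Variable n' : nat.
Local Notation N := n'.+2.
Local Notation C := R[i].
Local Notation cj := (@conjc R).
Local Notation Re := (@complex.Re R).
Local Notation Im := (@complex.Im R).
Local Notation h := (@hform R N).
Local Notation cplx := (@cplx R N).
Local Notation realify := (@realify R n').

Definition span (z : 'rV[C]_N) : 'M[R]_(N * 2) := (realify z + realify ('i%C *: z))%MS.

Lemma span_mem (z : 'rV[C]_N) (x : 'rV[R]_(N * 2)) : (x <= span z)%MS <-> exists c, cplx x = c *: z.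
Proof.
split.
  case/sub_addsmxP => [[u1 u2]] /= ->.
  rewrite (mx11_scalar u1) (mx11_scalar u2) !mul_scalar_mx.
  exists ((u1 0 0)%:C + (u2 0 0)%:C * 'i%C).
  by rewrite cplxD !cplxZ !cplxK scalerA -scalerDl.
case=> c e; rewrite -(realifyK x) e realify_lin.
by apply: addmx_sub_adds; apply: scalemx_sub; exact: submx_refl.
Qed.

Lemma eqmx_of m1 m2 (A : 'M[R]_(m1, N * 2)) (B : 'M[R]_(m2, N * 2)) :
  (forall x : 'rV[R]_(N * 2), (x <= A)%MS <-> (x <= B)%MS) -> (A == B)%MS.
Proof.
move=> H; apply/andP; split; apply/row_subP => i; apply/H; exact: row_sub.
Qed.

Lemma Lambda_span (z : 'rV[C]_N) : z != 0 -> h z z = 0 -> Lambda (span z).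
Proof.
move=> nz hz; exists z; split => //; last exact: span_mem.
by move=> c c'; rewrite hZl hZr hz !mulr0.
Qed.

Lemma rank_span (z : 'rV[C]_N) : z != 0 -> \rank (span z) = 2%N.
Proof.
move=> nz; rewrite /span addsmxE.
suff /eqP : row_free (col_mx (realify z) (realify ('i%C *: z))) by [].
apply: inj_row_free => v.
rewrite -[v]hsubmxK mul_row_col (mx11_scalar (lsubmx v)) (mx11_scalar (rsubmx v)).
rewrite !mul_scalar_mx => e.
have := congr1 cplx e; rewrite cplxD !cplxZ !cplxK cplx0 scalerA -scalerDl.
move/eqP; rewrite scaler_eq0 (negbTE nz) orbF => /eqP c0.
have a0 : lsubmx v 0 0 = 0 by have := congr1 Re c0 => /= H; lra.
have b0 : rsubmx v 0 0 = 0 by have := congr1 Im c0 => /= H; lra.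
by rewrite a0 b0 !raddf0 row_mx0.
Qed.

Lemma Lambda_eq (V : 'M[R]_(N * 2)) : Lambda V ->
  exists2 z, z != 0 /\ h z z = 0 & (V == span z)%MS.
Proof.
case=> z [nz hz hV]; exists z.
  by split => //; have := hz 1 1; rewrite !scale1r.
by apply: eqmx_of => x; rewrite hV span_mem.
Qed.

Lemma two_vecs (W : 'M[R]_(N * 2)) : \rank W = 2%N ->
  exists y1 y2 : 'rV[R]_(N * 2), [/\ (y1 <= W)%MS, (y2 <= W)%MS &
    forall r s : R, r *: y1 + s *: y2 = 0 -> r = 0 /\ s = 0].
Proof.
move=> rW.
have : exists m (B : 'M[R]_(m, N * 2)), [/\ m = 2%N, row_free B & (B <= W)%MS].
  by exists (\rank W), (row_base W); rewrite row_base_free eq_row_base submx_refl.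
case=> m [B [em fB sBW]]; subst m.
exists (row 0 B), (row 1 B); split.
- exact: submx_trans (row_sub _ _) sBW.
- exact: submx_trans (row_sub _ _) sBW.
move=> r s e.
pose u : 'rV[R]_2 := \row_i (if i == 0 then r else s).
have : u *m B = 0.
  rewrite mulmx_sum_row big_ord_recr big_ord_recr big_ord0 /= add0r.
  rewrite !mxE /= -e; congr (_ + _); congr (_ *: row _ _); exact: val_inj.
move/eqP; rewrite mulmx_free_eq0 // => /eqP u0.
have := congr1 (fun w : 'rV[R]_2 => w 0 0) u0; have := congr1 (fun w : 'rV[R]_2 => w 0 1) u0.
by rewrite !mxE /=.
Qed.

End R4.

End H4.
Import H4.

Module H5.
Section R5.
Variable R : realType.
Variable n' : nat.
Local Notation N := n'.+2.
Local Notation C := R[i].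
Local Notation cj := (@conjc R).
Local Notation Re := (@complex.Re R).
Local Notation Im := (@complex.Im R).
Local Notation h := (@hform R N).

Lemma h_comb (Y1 Y2 : 'rV[C]_N) (a b : C) :
  h (b *: Y1 - a *: Y2) (b *: Y1 - a *: Y2) =
  cj b * b * h Y1 Y1 - cj b * a * h Y1 Y2 - cj a * b * h Y2 Y1 + cj a * a * h Y2 Y2.
Proof. rewrite hBl !hBr !hZl !hZr; ring. Qed.

Lemma null_dep (z w : 'rV[C]_N) : z != 0 -> h z z = 0 -> h w w = 0 -> h w z = 0 ->
  exists k, w = k *: z.
Proof.
move=> nz hz hw hwz.
have hzw : h z w = 0 by rewrite hC hwz rmorph0.
set a := z 0 ord_max - z 0 ord0; set b := w 0 ord_max - w 0 ord0.
have u0 : b *: z - a *: w = 0.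
  apply: hpos_eq0; first by rewrite !mxE /a /b; ring.
  by rewrite h_comb hz hw hzw hwz !mulr0 !subrr addr0.
have [a0|a0] := eqVneq a 0.
  case/negP: nz; apply/eqP; apply: hpos_eq0; last by rewrite hz.
  by apply/eqP; rewrite -subr_eq0 -/a a0.
exists (a^-1 * b); rewrite -scalerA.
move/eqP: u0; rewrite subr_eq0 => /eqP ->.
by rewrite scalerA mulVf // scale1r.
Qed.

Lemma quad_core (A B Cc ar ai br bi : R) :
  0 < A * Cc - B ^+ 2 ->
  A * ((br ^+ 2 + bi ^+ 2) * A - 2 * B * (br * ar + bi * ai) + (ar ^+ 2 + ai ^+ 2) * Cc) <= 0 ->
  ar = 0 /\ ai = 0.
Proof.
move=> hD hQ.
have E : A * ((br ^+ 2 + bi ^+ 2) * A - 2 * B * (br * ar + bi * ai) + (ar ^+ 2 + ai ^+ 2) * Cc)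
  = (A * br - B * ar) ^+ 2 + (A * bi - B * ai) ^+ 2 + (A * Cc - B ^+ 2) * (ar ^+ 2 + ai ^+ 2)
  by ring.
rewrite E in hQ.
have h1 := sqr_ge0 (A * br - B * ar); have h2 := sqr_ge0 (A * bi - B * ai).
have h3 : (A * Cc - B ^+ 2) * (ar ^+ 2 + ai ^+ 2) <= 0 by lra.
have h4 : ar ^+ 2 + ai ^+ 2 <= 0.
  by rewrite -(pmulr_rle0 _ hD).
have := sqr_ge0 ar; have := sqr_ge0 ai; move=> g1 g2.
split; apply/eqP; rewrite -sqrf_eq0; apply/eqP; lra.
Qed.

Lemma Re_comb (Y1 Y2 : 'rV[C]_N) (a b : C) : Im (h Y1 Y2) = 0 ->
  Re (h (b *: Y1 - a *: Y2) (b *: Y1 - a *: Y2)) =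
  (Re b ^+ 2 + Im b ^+ 2) * Re (h Y1 Y1) - 2 * Re (h Y1 Y2) * (Re b * Re a + Im b * Im a)
  + (Re a ^+ 2 + Im a ^+ 2) * Re (h Y2 Y2).
Proof.
move=> hi; rewrite h_comb (hxx_real Y1) (hxx_real Y2) (hC Y1 Y2) (realC hi) cjR.
move: (Re (h Y1 Y1)) (Re (h Y1 Y2)) (Re (h Y2 Y2)) => A B D.
case: a => ? ?; case: b => ? ? /=; ring.
Qed.

Lemma gram_neg (Y1 Y2 : 'rV[C]_N) : Im (h Y1 Y2) = 0 -> Re (h Y1 Y1) < 0 ->
  Re (h Y1 Y1) * Re (h Y2 Y2) <= Re (h Y1 Y2) ^+ 2.
Proof.
move=> hi hA; rewrite leNgt; apply/negP; rewrite -subr_gt0 => hD.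
set a := Y1 0 ord_max - Y1 0 ord0; set b := Y2 0 ord_max - Y2 0 ord0.
have hu : 0 <= Re (h (b *: Y1 - a *: Y2) (b *: Y1 - a *: Y2)).
  by apply: hpos; rewrite !mxE /a /b; ring.
rewrite Re_comb // in hu.
have [ar ai] : Re a = 0 /\ Im a = 0.
  apply: (quad_core (Cc := Re (h Y2 Y2)) (br := Re b) (bi := Im b) hD); nra.
have a0 : a = 0 by apply: C_ext.
have := hpos (u := Y1); rewrite (_ : Y1 0 ord_max = Y1 0 ord0).
  by move=> /(_ erefl); lra.
by apply/eqP; rewrite -subr_eq0 -/a a0.
Qed.

Lemma gram_pos2 (Y1 Y2 : 'rV[C]_N) : n' = 0%N -> Im (h Y1 Y2) = 0 -> 0 < Re (h Y1 Y1) ->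
  Re (h Y1 Y1) * Re (h Y2 Y2) <= Re (h Y1 Y2) ^+ 2.
Proof.
move=> en hi hA; rewrite leNgt; apply/negP; rewrite -subr_gt0 => hD.
set a := Y1 0 ord_max + Y1 0 ord0; set b := Y2 0 ord_max + Y2 0 ord0.
have hu : Re (h (b *: Y1 - a *: Y2) (b *: Y1 - a *: Y2)) <= 0.
  by apply: hneg2 => //; rewrite !mxE /a /b; ring.
rewrite Re_comb // in hu.
have [ar ai] : Re a = 0 /\ Im a = 0.
  apply: (quad_core (Cc := Re (h Y2 Y2)) (br := Re b) (bi := Im b) hD); nra.
have a0 : a = 0 by apply: C_ext.
have := hneg2 (u := Y1) en; rewrite (_ : Y1 0 ord_max = - Y1 0 ord0).
  by move=> /(_ erefl); lra.
by apply/eqP; rewrite -subr_eq0 opprK -/a a0.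
Qed.

End R5.

End H5.
Import H5.

Module H6.
Section R6.
Variable R : realType.
Variable n' : nat.
Local Notation N := n'.+2.
Local Notation C := R[i].
Local Notation cj := (@conjc R).
Local Notation Re := (@complex.Re R).
Local Notation Im := (@complex.Im R).
Local Notation h := (@hform R N).
Local Notation mid := (@mid n').

Definition mkv (x y : C) (f : 'I_N -> C) : 'rV[C]_N :=
  \row_k (if k == ord0 then x else if k == ord_max then y else f k).

Lemma max_neq0 : (ord_max : 'I_N) != ord0.
Proof. by apply/eqP => /(congr1 val). Qed.

Lemma mkv0 x y f : mkv x y f 0 ord0 = x. Proof. by rewrite mxE eqxx. Qed.
Lemma mkvmax x y f : mkv x y f 0 ord_max = y.
Proof. by rewrite mxE (negbTE max_neq0) eqxx. Qed.
Lemma mkvmid x y f k : mid k -> mkv x y f 0 k = f k.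
Proof. by case/andP => h0 hm; rewrite mxE (negbTE h0) (negbTE hm). Qed.

Lemma h_mkv_l x y f u : h (mkv x y f) u =
  cj x * u 0 ord_max + cj y * u 0 ord0 + \sum_(k | mid k) cj (f k) * u 0 k.
Proof.
rewrite hsplit mkv0 mkvmax; congr (_ + _).
by apply: eq_bigr => k mk; rewrite mkvmid.
Qed.

Lemma h_mkv x y f x' y' f' : h (mkv x y f) (mkv x' y' f') =
  cj x * y' + cj y * x' + \sum_(k | mid k) cj (f k) * f' k.
Proof.
rewrite h_mkv_l mkv0 mkvmax; congr (_ + _).
by apply: eq_bigr => k mk; rewrite mkvmid.
Qed.

Lemma mid_sum_real (v : 'rV[C]_N) :
  \sum_(k | mid k) cj (v 0 k) * v 0 k = (Re (\sum_(k | mid k) cj (v 0 k) * v 0 k))%:C.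
Proof.
apply: realC; rewrite ImSum big1 // => k _; by rewrite cjxx.
Qed.

Lemma mid_sum0 (v : 'rV[C]_N) : Re (\sum_(k | mid k) cj (v 0 k) * v 0 k) = 0 ->
  forall k, mid k -> v 0 k = 0.
Proof.
move=> H k hk; apply: Re_cjxx_eq0; move: k hk.
apply: psumr_eq0P => [k _|]; first exact: Re_cjxx.
by rewrite -ReSum.
Qed.

Lemma pos_null (v : 'rV[C]_N) : (1 <= n')%N -> 0 < Re (h v v) ->
  exists z, [/\ z != 0, h z z = 0 & h z v = 0].
Proof.
move=> hn hP.
set a := v 0 ord0; set b := v 0 ord_max.
set Ms := \sum_(k | mid k) cj (v 0 k) * v 0 k.
set M := Re Ms; set P := Re (h v v).
have eMs : Ms = M%:C := mid_sum_real v.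
have hvv : h v v = cj a * b + cj b * a + Ms := hsplit v v.
have eP : h v v = P%:C := hxx_real v.
have M0 : 0 <= M := Re_midsum_ge0 v.
have [Mz|Mnz] := eqVneq M 0.
  have vk0 := mid_sum0 Mz.
  pose i1 : 'I_N := inord 1.
  have vi1 : nat_of_ord i1 = 1%N by rewrite inordK //; lia.
  have mi1 : mid i1.
    apply/andP; split; apply/eqP => e; move: vi1; rewrite e /=; lia.
  have Pge : 0 <= P by lra.
  pose z := mkv (cj a) (- cj b) (fun k => if k == i1 then (Num.sqrt P)%:C else 0).
  exists z; split.
  - apply/eqP => /(congr1 (fun w : 'rV[C]_N => w 0 i1)); rewrite mkvmid // eqxx mxE.
    move/(congr1 Re) => /= e.
    by have := sqrtr_gt0 P; rewrite hP e ltxx.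
  - rewrite h_mkv (bigD1 i1) //= eqxx big1 ?addr0; last first.
      by move=> k /andP [_ /negbTE ->]; rewrite cj0 mul0r.
    have sq : (Num.sqrt P)%:C * (Num.sqrt P)%:C = P%:C.
      by rewrite -rmorphM -expr2 sqr_sqrtr.
    rewrite cjR sq -eP hvv eMs Mz !cjN !cjK; ring.
  - rewrite h_mkv_l big1 ?addr0; last first.
      by move=> k mk; rewrite vk0 // mulr0.
    rewrite -/a -/b !cjN !cjK; ring.
have Mp : 0 < M by rewrite lt_def Mnz M0.
pose S := Num.sqrt (M * P).
have S0 : 0 <= S := sqrtr_ge0 _.
have hS : S ^+ 2 = M * P by rewrite sqr_sqrtr // mulr_ge0 //; lra.
have MS0 : M + S != 0 by apply: lt0r_neq0; lra.
have [t ht] : exists t, t * (M + S) = M by exists (M / (M + S)); rewrite mulfVK.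
have key : M - 2 * M * t - t ^+ 2 * (P - M) = 0.
  have : (M - 2 * M * t - t ^+ 2 * (P - M)) * (M + S) ^+ 2 = 0.
    transitivity (M * (M + S) ^+ 2 - 2 * M * (t * (M + S)) * (M + S)
       - (t * (M + S)) ^+ 2 * (P - M)); first by ring.
    rewrite ht; transitivity (M * (S ^+ 2 - M * P)); first by ring.
    by rewrite hS subrr mulr0.
  by move/eqP; rewrite mulf_eq0 expf_eq0 (negbTE MS0) andbF orbF => /eqP.
have keyC : M%:C - 2 * M%:C * t%:C - t%:C ^+ 2 * (P%:C - M%:C) = 0.
  have := congr1 (real_complex R) key.
  rewrite !rmorphB !rmorphM rmorph_nat /= => e; rewrite -[RHS](_ : 0%:C = 0) // -e; ring.
have hR : cj a * b + cj b * a = P%:C - M%:C by rewrite -eP hvv eMs; ring.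
pose z := mkv (- M%:C - t%:C * b * cj a) (t%:C * b * cj b) (fun k => cj b * v 0 k).
exists z; split.
- apply/eqP => z0.
  have [b0|bnz] := eqVneq b 0.
    have := congr1 (fun w : 'rV[C]_N => w 0 ord0) z0; rewrite /= mkv0 mxE b0.
    rewrite mulr0 mul0r subr0 => /(congr1 Re) /=; lra.
  have : Ms = 0.
    rewrite /Ms big1 // => k mk.
    have := congr1 (fun w : 'rV[C]_N => w 0 k) z0; rewrite /= mkvmid // mxE.
    by move/eqP; rewrite mulf_eq0 conjc_eq0 (negbTE bnz) /= => /eqP ->; rewrite mulr0.
  by move=> e; move: Mnz; rewrite /M e eqxx.
- rewrite h_mkv (eq_bigr (fun k => (b * cj b) * (cj (v 0 k) * v 0 k))); last first.
    by move=> k _; rewrite cjM cjK; ring.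
  rewrite -big_distrr /= -/Ms eMs !(cjB, cjN, cjM, cjK, cjR).
  transitivity (b * cj b * (M%:C - 2 * M%:C * t%:C - t%:C ^+ 2 * (cj a * b + cj b * a))).
    by ring.
  by rewrite hR keyC mulr0.
- rewrite h_mkv_l (eq_bigr (fun k => b * (cj (v 0 k) * v 0 k))); last first.
    by move=> k _; rewrite cjM cjK mulrA.
  rewrite -big_distrr /= -/Ms eMs -/a -/b !(cjB, cjN, cjM, cjK, cjR); ring.
Qed.

End R6.

End H6.
Import H6.

Module H7.
Section R7.
Variable R : realType.
Variable n' : nat.
Local Notation N := n'.+2.
Local Notation C := R[i].
Local Notation cj := (@conjc R).
Local Notation Re := (@complex.Re R).
Local Notation Im := (@complex.Im R).
Local Notation h := (@hform R N).
Local Notation cplx := (@cplx R N).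
Local Notation realify := (@realify R n').
Local Notation span := (@H4.span R n').
Local Notation RV := ('rV[R]_(N * 2)).

Lemma omegaE (u v : RV) : omega_h u v = Im (h (cplx u) (cplx v)).
Proof. by []. Qed.

Lemma Lambda_Iso2 (V : 'M[R]_(N * 2)) : Lambda V -> Iso2 V.
Proof.
move=> LV; split.
  case: (Lambda_eq LV) => z [nz _] /eqmx_rank ->; exact: rank_span.
case: LV => z [nz hz hV] u v /hV [c ec] /hV [c' ec'].
by rewrite omegaE ec ec' hz.
Qed.

Lemma Im_cji (x : C) : Im (cj 'i%C * x) = - Re x.
Proof. by case: x => a b /=; ring. Qed.

Lemma Lambda_antipodal (V W : 'M[R]_(N * 2)) : Lambda V -> Lambda W ->
  ~~ (V == W)%MS -> antipodal V W.
Proof.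
case=> z [nz hz hV]; case=> w [nw hw hW] nVW.
have hz0 : h z z = 0 by have := hz 1 1; rewrite !scale1r.
have hw0 : h w w = 0 by have := hw 1 1; rewrite !scale1r.
set d := h w z.
have dnz : d != 0.
  apply/eqP => d0; case/negP: nVW.
  have [k ek] := null_dep nz hz0 hw0 d0.
  have knz : k != 0 by apply: contra nw => /eqP k0; rewrite ek k0 scale0r.
  apply: eqmx_of => x; rewrite hV hW; split => -[c e].
    by exists (c / k); rewrite e ek scalerA mulfVK.
  by exists (c * k); rewrite e ek scalerA.
split.
  move=> x; set c := h w (cplx x) / d.
  exists (realify (c *: z)), (x - realify (c *: z)); split.
  - by apply/hV; exists c; rewrite cplxK.
  - move=> y /hW [c' ey]; rewrite omegaE ey cplxB cplxK hZl hBr hZr -/d /c divfK //.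
    by rewrite subrr mulr0.
  - by rewrite addrC subrK.
move=> v /hV [c ev] hp.
have y1 : (realify w <= W)%MS by apply/hW; exists 1; rewrite cplxK scale1r.
have y2 : (realify ('i%C *: w) <= W)%MS by apply/hW; exists 'i%C; rewrite cplxK.
have e1 := hp _ y1; have e2 := hp _ y2.
rewrite omegaE cplxK ev hZr -/d in e1.
rewrite omegaE cplxK ev hZl hZr -/d Im_cji in e2.
have cd0 : c * d = 0 by apply: C_ext => //=; lra.
have c0 : c = 0 by move/eqP: cd0; rewrite mulf_eq0 (negbTE dnz) orbF => /eqP.
by apply: cplx_eq0; rewrite ev c0 scale0r.
Qed.

Lemma gram_val (Y1 Y2 : 'rV[C]_N) (r s : R) : Im (h Y1 Y2) = 0 ->
  h (r%:C *: Y1 + s%:C *: Y2) (r%:C *: Y1 + s%:C *: Y2) =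
  (r ^+ 2 * Re (h Y1 Y1) + 2 * r * s * Re (h Y1 Y2) + s ^+ 2 * Re (h Y2 Y2))%:C.
Proof.
move=> hi; rewrite !hDl !hDr !hZl !hZr (hxx_real Y1) (hxx_real Y2) (hC Y1 Y2) (realC hi) !cjR.
move: (Re (h Y1 Y1)) (Re (h Y1 Y2)) (Re (h Y2 Y2)) => A B D.
by apply: C_ext => /=; ring.
Qed.

Lemma quad_root (A B D : R) : A != 0 -> A * D <= B ^+ 2 ->
  exists r, r ^+ 2 * A + 2 * r * 1 * B + 1 ^+ 2 * D = 0.
Proof.
move=> Anz hD; set S := Num.sqrt (B ^+ 2 - A * D).
have hS : S ^+ 2 = B ^+ 2 - A * D by rewrite sqr_sqrtr // subr_ge0.
exists ((S - B) / A).
transitivity ((S ^+ 2 - B ^+ 2 + A * D) / A); first by field.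
by rewrite hS (_ : B ^+ 2 - A * D - B ^+ 2 + A * D = 0) ?mul0r //; ring.
Qed.

Lemma not_antipodal (W : 'M[R]_(N * 2)) : Iso2 W -> exists2 V, Lambda V & ~ antipodal W V.
Proof.
case=> rW iW.
have [y1 [y2 [s1 s2 ind]]] := two_vecs rW.
set Y1 := cplx y1; set Y2 := cplx y2.
have hi : Im (h Y1 Y2) = 0 by have := iW y1 y2 s1 s2.
have cx : forall r s : R, cplx (r *: y1 + s *: y2) = r%:C *: Y1 + s%:C *: Y2.
  by move=> r s; rewrite cplxD !cplxZ.
suff [r [s [z [rs nz hz hzx]]]] : exists r s z, [/\ (r != 0) || (s != 0), z != 0, h z z = 0 &
    h z (cplx (r *: y1 + s *: y2)) = 0].
  exists (span z); first exact: Lambda_span.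
  case=> _ H2.
  have x0 : r *: y1 + s *: y2 = 0.
    apply: H2; first by apply: addmx_sub; apply: scalemx_sub.
    move=> y /span_mem [c ey]; by rewrite omegaE ey hZl hzx mulr0.
  have [r0 s0] := ind _ _ x0.
  by move: rs; rewrite r0 s0 eqxx.
have null : forall r s : R, (r != 0) || (s != 0) ->
    r ^+ 2 * Re (h Y1 Y1) + 2 * r * s * Re (h Y1 Y2) + s ^+ 2 * Re (h Y2 Y2) = 0 ->
    exists r s z, [/\ (r != 0) || (s != 0), z != 0, h z z = 0 &
    h z (cplx (r *: y1 + s *: y2)) = 0].
  move=> r s rs q0; exists r, s, (cplx (r *: y1 + s *: y2)); split => //.
  - apply/eqP => /cplx_eq0 x0; have [r0 s0] := ind _ _ x0.
    by move: rs; rewrite r0 s0 eqxx.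
  - by rewrite cx gram_val // q0.
  - by rewrite cx gram_val // q0.
set A := Re (h Y1 Y1).
have [A0|An] := eqVneq A 0.
  by apply: (null 1 0); [rewrite oner_eq0 | rewrite -/A A0; ring].
have root : A * Re (h Y2 Y2) <= Re (h Y1 Y2) ^+ 2 -> exists r s z, [/\ (r != 0) || (s != 0), z != 0, h z z = 0 &
    h z (cplx (r *: y1 + s *: y2)) = 0].
  move=> hD; have [r hr] := quad_root An hD.
  by apply: (null r 1); [rewrite oner_eq0 orbT | rewrite -hr /A; ring].
have [Aneg|Apos] := ltP A 0.
  by apply: root; apply: gram_neg.
have Ap : 0 < A by rewrite lt_def An Apos.
have [n0|n1] : n' = 0%N \/ (1 <= n')%N by case: (n'); [left | right].
  by apply: root; apply: gram_pos2.
have [z [nz hz hzv]] := pos_null n1 Ap.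
exists 1, 0, z; split => //; first by rewrite oner_eq0.
by rewrite scale1r scale0r addr0.
Qed.

End R7.


End H7.
Import H7.

Theorem mainTheorem15 (R : realType) (n : nat) (hn : (2 <= n)%N) :
  maximally_antipodal (@Lambda R n).
Proof.
case: n hn => [|[|n']] // _; split.
- exact: Lambda_Iso2.
- exact: Lambda_antipodal.
- exact: not_antipodal.
Qed.
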